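(* Let $\Delta\subset\mathbb{Z}^2\setminus\{(0,0)\}$ be a finite multiset which is balanced, non-degenerate and even, with associated polygon $P_\Delta$, sides $\sigma\in P^1_\Delta$, numbers $n^\sigma$ and $k^\sigma_i$ as in the context. Then the set of sequences $\boldsymbol z=(z^\sigma_i)_{\sigma\in P^1_\Delta,\,1\le i\le n^\sigma}$, $z^\sigma_i\in\operatorname{Tor}(\sigma)^\times$, satisfying the Menelaus $\Delta$-condition forms an algebraic hypersurface $\operatorname{Men}(\Delta)\subset\prod_{\sigma\in P^1_\Delta}\operatorname{Tor}(\sigma)^{n^\sigma}$.
   Context: A multiset $\Delta\subset\mathbb{Z}^2\setminus\{(0,0)\}$ is balanced if its elements sum to $0$, non-degenerate if its elements span $\mathbb{R}^2$, and even if $\Delta\subset(2\mathbb{Z})^2$. Rotating each $\boldsymbol a\in\Delta$ counterclockwise by $\pi/2$ and concatenating the resulting vectors gives the counterclockwise oriented boundary of a convex lattice polygon $P_\Delta$ (defined up to translation). $P^1_\Delta$ denotes the set of sides of $P_\Delta$; for $\sigma\in P^1_\Delta$, let $\boldsymbol a^\sigma_1,\dots,\boldsymbol a^\sigma_{n^\sigma}$ be the elements of $\Delta$ that are outer normals to $\sigma$, and let $2k^\sigma_i$ be the lattice length of $\boldsymbol a^\sigma_i$ (its Euclidean length divided by the length of a primitive parallel integral vector). $\operatorname{Tor}(P_\Delta)$ is the complex toric surface of $P_\Delta$, $\operatorname{Tor}(\sigma)$ the toric divisor corresponding to $\sigma$, $\operatorname{Tor}(\sigma)^\times\cong\mathbb{C}^\times$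 its dense orbit, and $\mathcal{L}_{P_\Delta}$ the tautological line bundle (its global sections are spanned by the monomials $z^\omega$, $\omega\in P_\Delta\cap\mathbb{Z}^2$). A sequence $\boldsymbol z=(z^\sigma_i)$ with $z^\sigma_i\in\operatorname{Tor}(\sigma)^\times$ satisfies the Menelaus $\Delta$-condition if there is a curve $C\in|\mathcal{L}_{P_\Delta}|$ containing no toric divisor as a component such that, for each $\sigma\in P^1_\Delta$, the scheme-theoretic intersection of $C$ and $\operatorname{Tor}(\sigma)$ equals $\sum_{i=1}^{n^\sigma}2k^\sigma_i z^\sigma_i$. *)

(* Defs.v *)
From HB Require Import structures.
From mathcomp Require Import all_boot all_order all_algebra.
From mathcomp Require Import reals complex.
From mathcomp Require Import mpoly.
Set Implicit Arguments. Unset Strict Implicit. Unset Printing Implicit Defensive.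
Import Order.TTheory GRing.Theory Num.Theory.
Local Open Scope ring_scope.

Definition vec := (int * int)%type.
Definition vadd (u v : vec) : vec := (u.1 + v.1, u.2 + v.2).
Definition vscale (j : int) (u : vec) : vec := (j * u.1, j * u.2).
Definition dot (u v : vec) : int := u.1 * v.1 + u.2 * v.2.
Definition cross (u v : vec) : int := u.1 * v.2 - u.2 * v.1.
Definition rot (a : vec) : vec := (- a.2, a.1).

Definition Delta_nonzero_vecs (D : seq vec) : bool := all (fun a => a != (0, 0)) D.
Definition Delta_balanced (D : seq vec) : Prop :=
  \sum_(a <- D) a.1 = 0 /\ \sum_(a <- D) a.2 = 0.
Definition Delta_nondegenerate (D : seq vec) : Prop :=
  exists2 a, a \in D & exists2 b, b \in D & cross a b != 0.
Definition Delta_even_vecs (D : seq vec) : Prop :=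
  forall a, a \in D -> (2 %| a.1)%Z /\ (2 %| a.2)%Z.

(* lattice length of a nonzero integer vector (= 2 k for even vectors) *)
Definition latlen (a : vec) : nat := gcdn `|a.1|%N `|a.2|%N.
Definition prim_edge (a : vec) : vec :=
  ((rot a).1 %/ (latlen a)%:Z, (rot a).2 %/ (latlen a)%:Z)%Z.

(* a and b are positively parallel (outer normals to the same side) *)
Definition same_dir (a b : vec) : bool := (cross a b == 0) && (0 < dot a b).

(* angular order on nonzero vectors: argument in [0, 2 pi) *)
Definition half (v : vec) : nat := if (0 < v.2) || ((v.2 == 0) && (0 < v.1)) then 0%N else 1%N.
Definition ang_lt (u v : vec) : bool :=
  (half u < half v)%N || ((half u == half v) && (0 < cross u v)).

(* P_Delta (a fixed translate): edges rot b concatenated in counterclockwise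
   order of argument, starting at the origin.  vstart D a is the initial
   vertex of the side with outer normal direction a. *)
Definition vstart (D : seq vec) (a : vec) : vec :=
  foldr vadd (0, 0) [seq rot b | b <- D & ang_lt (rot b) (rot a)].
Definition in_poly (D : seq vec) (w : vec) : bool :=
  all (fun b => dot w b <= dot (vstart D b) b) D.
Definition side_len (D : seq vec) (a : vec) : nat :=
  \sum_(b <- D | same_dir a b) latlen b.
Definition side_pt (D : seq vec) (a : vec) (j : nat) : vec :=
  vadd (vstart D a) (vscale j%:Z (prim_edge a)).

Section Menelaus.
Variable R : realType.
Local Notation C := (R[i]).

(* Restriction of f = sum_w c_w z^w to the orbit Tor(sigma)^x, written in the
   coordinate t = z^(prim_edge a) on Tor(sigma)^x ~ C^x. *)
Definition side_poly (D : seq vec) (c : vec -> C) (a : vec) : {poly C} :=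
  \sum_(j < (side_len D a).+1) c (side_pt D a j) *: 'X^j.

(* Menelaus Delta-condition for z (z_i attached to the i-th element of D) *)
Definition menelaus (D : seq vec) (z : 'I_(size D) -> C) : Prop :=
  exists c : vec -> C,
    (* C is a curve in |L_P|: a nonzero section *)
    (exists2 w, in_poly D w & c w != 0) /\
    (* for every side sigma (indexed by any a in D normal to it):
       no toric divisor is a component and
       C . Tor(sigma) = sum_{b in sigma} 2 k_b z_b *)
    forall i : 'I_(size D),
      side_poly D c (nth (0,0) D i) != 0 /\
      exists2 lam : C, lam != 0 &
        side_poly D c (nth (0,0) D i) =
        lam *: \prod_(l < size D | same_dir (nth (0,0) D i) (nth (0,0) D l))
                 ('X - (z l)%:P) ^+ latlen (nth (0,0) D l).

(* units of the Laurent polynomial ring C[x_1^{+-1},...,x_n^{+-1}]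
   (polynomials being multiplied by monomials) *)
Definition torus_unit (n : nat) (F : mpoly.mpoly n C) : Prop :=
  exists (lam : C) (m : mpoly.multinom n), F = lam *: mpoly.mpolyX C m.

(* S is an algebraic hypersurface of the torus (C^x)^n: the zero locus in the
   torus of a single nonzero non-unit (Laurent) polynomial. *)
Definition torus_hypersurface (n : nat) (S : ('I_n -> C) -> Prop) : Prop :=
  exists F : mpoly.mpoly n C, F != 0 /\ ~ torus_unit F /\
    forall z : 'I_n -> C, (forall i, z i != 0) ->
      (S z <-> mpoly.meval z F = 0).

End Menelaus.
Arguments menelaus {R} D z.
Arguments torus_hypersurface {R} n S.
Arguments side_poly {R} D c a.

(* Main.v *)
Require Import Defs.
From HB Require Import structures.
From mathcomp Require Import all_boot all_order all_algebra.
From mathcomp Require Import reals complex mpoly.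
Local Open Scope ring_scope.
From mathcomp Require Import zify ring lra.
Require Import Defs.
Set Implicit Arguments. Unset Strict Implicit. Unset Printing Implicit Defensive.
Import Order.TTheory GRing.Theory Num.Theory.

Ltac vc u1 u2 v1 v2 w1 w2 :=
  rewrite /ang_lt /half /cross /dot /= ?xpair_eqE;
  case: (ltrP 0 u2) => ?; case: (ltrP 0 v2) => ?; case: (ltrP 0 w2) => ? /=;
  try (case: (eqVneq u2 0) => ?);  try (case: (eqVneq v2 0) => ?); try (case: (eqVneq w2 0) => ?);
  simpl; try lia;
  try (case: (ltrP 0 u1) => ?); try (case: (ltrP 0 v1) => ?); try (case: (ltrP 0 w1) => ?); simpl; try lia; try nia.

Lemma ang_irr (u : vec) : ~~ ang_lt u u.
Proof. rewrite /ang_lt /cross ltnn eqxx /=; apply/negP; lia. Qed.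

Lemma ang_trans (u v w : vec) : ang_lt u v -> ang_lt v w -> ang_lt u w.
Proof. case: u => u1 u2; case: v => v1 v2; case: w => w1 w2; vc u1 u2 v1 v2 w1 w2. Qed.

Lemma ang_negtrans (u v w : vec) : u != (0,0) -> v != (0,0) -> w != (0,0) ->
  ang_lt u w -> ang_lt u v || ang_lt v w.
Proof. case: u => u1 u2; case: v => v1 v2; case: w => w1 w2; vc u1 u2 v1 v2 w1 w2. Qed.

Lemma ang_cls (u v : vec) : u != (0,0) -> v != (0,0) ->
  (~~ ang_lt u v && ~~ ang_lt v u) = (cross u v == 0) && (0 < dot u v).
Proof.
case: u => u1 u2; case: v => v1 v2.
rewrite /ang_lt /half /cross /dot /= ?xpair_eqE.
case: (ltrP 0 u2) => ?; case: (ltrP 0 v2) => ? /=;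
  try (case: (eqVneq u2 0) => ?);  try (case: (eqVneq v2 0) => ?);
  simpl; try lia;
  try (case: (ltrP 0 u1) => ?); try (case: (ltrP 0 v1) => ?); simpl; try lia; try nia.
Qed.

Lemma F1 (f u : vec) : half f = 0%N -> ang_lt u f -> 0 < cross u f.
Proof. by rewrite /ang_lt => ->; rewrite ltn0 /= => /andP[_ ->]. Qed.

Lemma F2 (f u : vec) : half f != 0%N -> ang_lt f u -> cross u f < 0.
Proof.
case: f => w1 w2; case: u => u1 u2.
rewrite /ang_lt /half /cross /=.
case: (ltrP 0 u2) => ?; case: (ltrP 0 w2) => ? /=;
  try (case: (eqVneq u2 0) => ?); try (case: (eqVneq w2 0) => ?);
  simpl; try lia;
  try (case: (ltrP 0 u1) => ?); try (case: (ltrP 0 w1) => ?); simpl; try lia.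
Qed.

Lemma L1s (f u u' : vec) : f != (0,0) -> u != (0,0) -> u' != (0,0) ->
  half f = 0%N -> ang_lt f u -> 0 < cross u f -> ~~ ang_lt u' u -> 0 < cross u' f.
Proof.
case: f => w1 w2; case: u => u1 u2; case: u' => v1 v2.
rewrite /ang_lt /half /cross /dot /= ?xpair_eqE.
case: (ltrP 0 u2) => ?; case: (ltrP 0 v2) => ?; case: (ltrP 0 w2) => ? /=;
  try (case: (eqVneq u2 0) => ?);  try (case: (eqVneq v2 0) => ?); try (case: (eqVneq w2 0) => ?);
  simpl; try lia;
  try (case: (ltrP 0 u1) => ?); try (case: (ltrP 0 v1) => ?); try (case: (ltrP 0 w1) => ?); simpl; try lia; try nia.
Qed.

Lemma L1w (f u u' : vec) : f != (0,0) -> u != (0,0) -> u' != (0,0) ->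
  half f = 0%N -> ang_lt f u -> 0 <= cross u f -> ~~ ang_lt u' u -> 0 <= cross u' f.
Proof.
case: f => w1 w2; case: u => u1 u2; case: u' => v1 v2.
rewrite /ang_lt /half /cross /dot /= ?xpair_eqE.
case: (ltrP 0 u2) => ?; case: (ltrP 0 v2) => ?; case: (ltrP 0 w2) => ? /=;
  try (case: (eqVneq u2 0) => ?);  try (case: (eqVneq v2 0) => ?); try (case: (eqVneq w2 0) => ?);
  simpl; try lia;
  try (case: (ltrP 0 u1) => ?); try (case: (ltrP 0 v1) => ?); try (case: (ltrP 0 w1) => ?); simpl; try lia; try nia.
Qed.

Lemma par3 (f a b : vec) : f != (0,0) -> cross a f = 0 -> cross b f = 0 -> cross a b = 0.
Proof.
case: f => w1 w2; case: a => u1 u2; case: b => v1 v2.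
rewrite /cross /= ?xpair_eqE => /nandP [] h ha hb.
- have : w1 * (u1 * v2 - u2 * v1) = 0.
    have -> : w1 * (u1 * v2 - u2 * v1) = v1 * (u1*w2 - u2*w1) - u1 * (v1*w2 - v2*w1) by ring.
    by rewrite ha hb !mulr0 subr0.
  by move/eqP; rewrite mulf_eq0 (negbTE h) /= => /eqP.
- have : w2 * (u1 * v2 - u2 * v1) = 0.
    have -> : w2 * (u1 * v2 - u2 * v1) = v2 * (u1*w2 - u2*w1) - u2 * (v1*w2 - v2*w1) by ring.
    by rewrite ha hb !mulr0 subr0.
  by move/eqP; rewrite mulf_eq0 (negbTE h) /= => /eqP.
Qed.

Lemma cross_rot (a b : vec) : cross (rot a) (rot b) = cross a b.
Proof. rewrite /cross /rot /=; lia. Qed.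
Lemma dot_rot (a b : vec) : dot (rot a) (rot b) = dot a b.
Proof. rewrite /dot /rot /=; lia. Qed.
Lemma dot_cross (w a : vec) : dot w a = cross w (rot a).
Proof. rewrite /dot /cross /rot /=; lia. Qed.
Lemma rot_neq0 (a : vec) : a != (0,0) -> rot a != (0,0).
Proof. case: a => a1 a2; rewrite /rot /= !xpair_eqE; lia. Qed.

Lemma latlen_gt0 (a : vec) : a != (0,0) -> (0 < latlen a)%N.
Proof.
case: a => a1 a2; rewrite /latlen /= xpair_eqE gcdn_gt0 !absz_gt0.
by case/nandP => ->; rewrite ?orbT.
Qed.

Lemma prim_mul (a : vec) :
  (rot a).1 = (prim_edge a).1 * (latlen a)%:Z /\ (rot a).2 = (prim_edge a).2 * (latlen a)%:Z.
Proof.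
case: a => a1 a2; rewrite /prim_edge /rot /latlen /=; split; rewrite divzK //.
- by rewrite dvdzE abszN dvdn_gcdr.
- by rewrite dvdzE dvdn_gcdl.
Qed.

Lemma prim_neq0 (a : vec) : a != (0,0) -> prim_edge a != (0,0).
Proof.
move=> a0; have := rot_neq0 a0; case: (prim_mul a) => h1 h2.
apply: contra => /eqP E; by rewrite [rot a]surjective_pairing h1 h2 E /= !mul0r.
Qed.

Lemma prim_coprime (a : vec) : a != (0,0) ->
  coprime `|(prim_edge a).1|%N `|(prim_edge a).2|%N.
Proof.
move=> a0; have g0 := latlen_gt0 a0; case: (prim_mul a) => h1 h2.
have e1 : `|a.2|%N = (`|(prim_edge a).1| * latlen a)%N.
  by rewrite -abszN -[in RHS](absz_nat (latlen a)) -abszM -h1.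
have e2 : `|a.1|%N = (`|(prim_edge a).2| * latlen a)%N.
  by rewrite -[in RHS](absz_nat (latlen a)) -abszM -h2.
have h := muln_gcdl `|(prim_edge a).2|%N `|(prim_edge a).1|%N (latlen a).
rewrite -e1 -e2 in h.
rewrite /coprime gcdnC; apply/eqP; apply/eqP; rewrite -(eqn_pmul2r g0) mul1n; apply/eqP.
by rewrite /latlen in h *.
Qed.

Lemma prim_same (a b : vec) : a != (0,0) -> b != (0,0) -> same_dir a b ->
  prim_edge a = prim_edge b.
Proof.
move=> a0 b0; rewrite /same_dir -cross_rot -dot_rot.
have ga := latlen_gt0 a0; have gb := latlen_gt0 b0.
have ca := prim_coprime a0; have cb := prim_coprime b0.
case: (prim_mul a) (prim_mul b) => ha1 ha2 [hb1 hb2].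
rewrite /cross /dot ha1 ha2 hb1 hb2.
move: ca cb ga gb; case: (prim_edge a) => u1 u2; case: (prim_edge b) => v1 v2 /=.
set g := latlen a; set h := latlen b => ca cb ga gb.
have gh : 0 < (g * h)%:Z by rewrite ltz_nat muln_gt0 ga gb.
move=> /andP[/eqP hc hd].
have c0 : u1 * v2 = u2 * v1.
  have : (u1 * v2 - u2 * v1) * (g * h)%N%:Z = 0 by rewrite -hc PoszM; ring.
  by move/eqP; rewrite mulf_eq0 (negbTE (lt0r_neq0 gh)) orbF subr_eq0 => /eqP.
have d0 : 0 < u1 * v1 + u2 * v2.
  have : 0 < (u1 * v1 + u2 * v2) * (g * h)%N%:Z by move: hd; rewrite PoszM; congr (0 < _); ring.
  by rewrite pmulr_lgt0.
have n1 : (`|u1| * `|v2| = `|u2| * `|v1|)%N by rewrite -!abszM c0.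
have e1 : `|u1|%N = `|v1|%N.
  apply/eqP; rewrite eqn_dvd; apply/andP; split.
  - by rewrite -(Gauss_dvdr _ ca) -n1 dvdn_mulr.
  - by rewrite -(Gauss_dvdr _ cb) (mulnC `|v2|%N) n1 dvdn_mull.
have e2 : `|u2|%N = `|v2|%N.
  apply/eqP; rewrite eqn_dvd; apply/andP; split.
  - have ca' : coprime `|u2|%N `|u1|%N by rewrite coprime_sym.
    by rewrite -(Gauss_dvdr _ ca') n1 dvdn_mulr.
  - have cb' : coprime `|v2|%N `|v1|%N by rewrite coprime_sym.
    by rewrite -(Gauss_dvdr _ cb') mulnC -n1 dvdn_mull.
move: c0 d0; have [->|->] : v1 = u1 \/ v1 = - u1 by lia.
all: have [->|->] : v2 = u2 \/ v2 = - u2 by lia.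
all: clear; move=> c0 d0; try done.
all: have h1 : 0 <= u1 * u1 by nia.
all: have h2 : 0 <= u2 * u2 by nia.
all: try (exfalso; move: d0; rewrite !mulrN -opprD oppr_gt0 => d0; lia).
all: have : u1 * u2 = 0 by nia.
all: move/eqP; rewrite mulf_eq0 => /orP[] /eqP E; rewrite E in d0 *; congr pair; nia.
Qed.

Unset Implicit Arguments.
Definition dd (D : seq vec) (l : 'I_(size D)) : vec := nth (0,0) D l.
Definition ee D l := rot (dd D l).
Definition UU D : seq 'I_(size D) :=
  flatten [seq nseq (latlen (dd D l)) l | l <- enum 'I_(size D)].
Definition lel D : rel 'I_(size D) := fun x y => ~~ ang_lt (ee D y) (ee D x).
Definition ss D := sort (lel D) (UU D).

Set Implicit Arguments.

Lemma transport (R : Type) (idx : R) (op : Monoid.com_law idx) D x0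
  (P : pred 'I_(size D)) (F : 'I_(size D) -> R) :
  \big[op/idx]_(0 <= t < size (ss D) | P (nth x0 (ss D) t)) F (nth x0 (ss D) t) =
  \big[op/idx]_(l < size D | P l) iter (latlen (dd D l)) (op (F l)) idx.
Proof.
have pe : perm_eq (ss D) (UU D) by rewrite /ss perm_sort perm_refl.
rewrite -big_nth (perm_big _ pe) /UU big_flatten big_map.
rewrite big_enum /= [RHS]big_mkcond; apply: eq_bigr => l _.
by rewrite big_nseq_cond.
Qed.

Lemma sorted_count (T : eqType) (le : rel T) (P : pred T) (s : seq T) x0 :
  transitive le -> sorted le s -> (forall x y, le x y -> P y -> P x) ->
  forall t, (t < size s)%N -> P (nth x0 s t) = (t < count P s)%N.
Proof.
move=> tr; elim: s => [|x s IH] //= srt dc t.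
have srt' : sorted le s := path_sorted srt.
have mn := order_path_min tr srt.
case Px: (P x) => /=.
  by case: t => [|t] //= ht; rewrite IH.
have c0 : count P s = 0%N.
  apply/eqP; rewrite -leqn0 leqNgt -has_count; apply/negP => /hasP [y ys Py].
  by move/allP: mn => /(_ y ys) /dc /(_ Py); rewrite Px.
rewrite c0 /=; case: t => [|t] //= ht; apply/negP => Pt.
have : nth x0 s t \in s by rewrite mem_nth.
by move/allP: mn => H /H /dc /(_ Pt); rewrite Px.
Qed.

Lemma dd_nz D (l : 'I_(size D)) : Delta_nonzero_vecs D -> dd D l != (0,0).
Proof. by move/allP => H; apply: H; rewrite mem_nth. Qed.
Lemma ee_nz D (l : 'I_(size D)) : Delta_nonzero_vecs D -> ee D l != (0,0).
Proof. by move=> h; apply: rot_neq0; apply: dd_nz. Qed.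

Lemma lel_trans D : Delta_nonzero_vecs D -> transitive (lel D).
Proof.
move=> h y x z; rewrite /lel => hyx hzy; apply/negP => hzx.
case/orP: (ang_negtrans (ee_nz z h) (ee_nz y h) (ee_nz x h) hzx) => H.
  by rewrite H in hzy.
by rewrite H in hyx.
Qed.

Lemma lel_total D : total (lel D).
Proof.
move=> x y; rewrite /lel -negb_and; apply/negP => /andP[h1 h2].
by have := ang_trans h1 h2; rewrite (negbTE (ang_irr _)).
Qed.

Lemma ss_sorted D : sorted (lel D) (ss D).
Proof. exact: sort_sorted (@lel_total D) _. Qed.

Lemma ss_le D x0 (t t' : nat) : Delta_nonzero_vecs D ->
  (t <= t')%N -> (t' < size (ss D))%N ->
  ~~ ang_lt (ee D (nth x0 (ss D) t')) (ee D (nth x0 (ss D) t)).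
Proof.
move=> h tt' t'M.
have := sorted_leq_nth (@lel_trans D h) (fun x => ang_irr (ee D x)) x0 (ss_sorted D).
by move=> /(_ t t'); apply => //; rewrite inE; apply: leq_ltn_trans t'M.
Qed.

Definition plt D (f : vec) := count (fun x => ang_lt (ee D x) f) (ss D).
Definition ple D (f : vec) := count (fun x => ~~ ang_lt f (ee D x)) (ss D).

Lemma plt_char D x0 f t : Delta_nonzero_vecs D -> f != (0,0) ->
  (t < size (ss D))%N -> ang_lt (ee D (nth x0 (ss D) t)) f = (t < plt D f)%N.
Proof.
move=> h f0 ht.
apply: (@sorted_count _ (lel D) (fun x => ang_lt (ee D x) f) (ss D) x0 (lel_trans h) (ss_sorted D)) => //.
move=> x y; rewrite /lel => hyx hyf.
by case/orP: (ang_negtrans (ee_nz y h) (ee_nz x h) f0 hyf) => H //; rewrite H in hyx.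
Qed.

Lemma ple_char D x0 f t : Delta_nonzero_vecs D -> f != (0,0) ->
  (t < size (ss D))%N -> ~~ ang_lt f (ee D (nth x0 (ss D) t)) = (t < ple D f)%N.
Proof.
move=> h f0 ht.
apply: (@sorted_count _ (lel D) (fun x => ~~ ang_lt f (ee D x)) (ss D) x0 (lel_trans h) (ss_sorted D)) => //.
move=> x y; rewrite /lel => hyx hfy; apply/negP => hfx.
by case/orP: (ang_negtrans f0 (ee_nz y h) (ee_nz x h) hfx) => H; [rewrite H in hfy | rewrite H in hyx].
Qed.

Lemma plt_le_ple D f : (plt D f <= ple D f)%N.
Proof.
apply: sub_count => x /=; apply: contraL => h; apply/negP => h'.
by have := ang_trans h h'; rewrite (negbTE (ang_irr _)).
Qed.

Lemma ple_leM D f : (ple D f <= size (ss D))%N.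
Proof. exact: count_size. Qed.

Unset Implicit Arguments.
Definition uu D (x0 : 'I_(size D)) t := prim_edge (dd D (nth x0 (ss D) t)).
Definition QQ D (x0 : 'I_(size D)) k : vec :=
  (\sum_(0 <= t < k) (uu D x0 t).1, \sum_(0 <= t < k) (uu D x0 t).2).
Set Implicit Arguments.

Lemma foldr_vadd (r : seq vec) :
  foldr vadd (0,0) r = (\sum_(x <- r) x.1, \sum_(x <- r) x.2).
Proof. by elim: r => [|x r IH]; rewrite ?big_nil ?big_cons //= IH. Qed.

Lemma iter_prim (b : vec) (k : bool) :
  iter (latlen b) (+%R (if k then (prim_edge b).1 else (prim_edge b).2)) 0 =
  (if k then (rot b).1 else (rot b).2).
Proof.
case: (prim_mul b) => h1 h2; rewrite iter_addr_0 -mulr_natr.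
by case: k; rewrite natz ?h1 ?h2.
Qed.

Lemma sum_range_pred D x0 (P : pred 'I_(size D)) (F : 'I_(size D) -> int) k :
  (k <= size (ss D))%N ->
  (forall t, (t < size (ss D))%N -> P (nth x0 (ss D) t) = (t < k)%N) ->
  \sum_(0 <= t < k) F (nth x0 (ss D) t) =
  \sum_(l < size D | P l) iter (latlen (dd D l)) (+%R (F l)) 0.
Proof.
move=> kM hP; rewrite -(transport _ x0) (big_nat_widen _ _ _ _ _ kM) big_nat_cond [RHS]big_nat_cond.
apply: eq_bigl => t /=; case: (boolP (t < size (ss D))%N) => tM.
  by rewrite /= hP.
by [].
Qed.

Lemma Q_start D x0 (la : 'I_(size D)) : Delta_nonzero_vecs D ->
  QQ D x0 (plt D (ee D la)) = vstart D (dd D la).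
Proof.
move=> h; rewrite /vstart foldr_vadd /QQ.
have E k : \sum_(0 <= t < plt D (ee D la)) (if k then (uu D x0 t).1 else (uu D x0 t).2) =
    \sum_(x <- [seq rot b | b <- D & ang_lt (rot b) (rot (dd D la))])
        (if k then x.1 else x.2).
  rewrite big_map big_filter (big_nth (0,0)) big_mkord.
  rewrite /uu (@sum_range_pred D x0 (fun l => ang_lt (ee D l) (ee D la))
     (fun l => if k then (prim_edge (dd D l)).1 else (prim_edge (dd D l)).2)).
  - by apply: eq_bigr => l _; case: k; rewrite (iter_prim _ true) || rewrite (iter_prim _ false).
  - exact: count_size.
  - by move=> t tM; rewrite plt_char // ee_nz.
by rewrite (E true) (E false).
Qed.

Lemma cls_char D x0 (la : 'I_(size D)) t : Delta_nonzero_vecs D -> (t < size (ss D))%N ->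
  (~~ ang_lt (ee D (nth x0 (ss D) t)) (ee D la) && ~~ ang_lt (ee D la) (ee D (nth x0 (ss D) t)))
  = (plt D (ee D la) <= t < ple D (ee D la))%N.
Proof.
move=> h tM; rewrite plt_char ?ee_nz // ple_char ?ee_nz //.
by rewrite -leqNgt.
Qed.

Lemma cls_same D x0 (la : 'I_(size D)) t : Delta_nonzero_vecs D -> (t < size (ss D))%N ->
  (plt D (ee D la) <= t < ple D (ee D la))%N ->
  same_dir (dd D la) (dd D (nth x0 (ss D) t)).
Proof.
move=> h tM ht; rewrite -(cls_char x0 la h tM) andbC in ht.
by rewrite /same_dir -cross_rot -dot_rot -ang_cls // ee_nz.
Qed.

Lemma uu_cls D x0 (la : 'I_(size D)) t : Delta_nonzero_vecs D -> (t < size (ss D))%N ->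
  (plt D (ee D la) <= t < ple D (ee D la))%N -> uu D x0 t = prim_edge (dd D la).
Proof.
move=> h tM ht; rewrite /uu; symmetry; apply: prim_same; rewrite ?dd_nz //.
exact: cls_same.
Qed.

Lemma Q_class D x0 (la : 'I_(size D)) j : Delta_nonzero_vecs D ->
  (plt D (ee D la) + j <= ple D (ee D la))%N ->
  QQ D x0 (plt D (ee D la) + j) =
  vadd (QQ D x0 (plt D (ee D la))) (vscale j%:Z (prim_edge (dd D la))).
Proof.
move=> h hj; rewrite /QQ /vadd /vscale /=.
have hM : (plt D (ee D la) + j <= size (ss D))%N by apply: leq_trans hj (ple_leM _ _).
have E k : \sum_(plt D (ee D la) <= t < plt D (ee D la) + j)
     (if k then (uu D x0 t).1 else (uu D x0 t).2) =
     j%:Z * (if k then (prim_edge (dd D la)).1 else (prim_edge (dd D la)).2).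
  rewrite big_nat_cond (eq_bigr (fun _ => if k then (prim_edge (dd D la)).1 else (prim_edge (dd D la)).2)).
    by rewrite -big_nat_cond sumr_const_nat addKn -mulr_natl natz.
  move=> t /andP[/andP[t1 t2] _]; rewrite (@uu_cls D x0 la t h); first by [].
    by apply: leq_trans hM.
  by rewrite t1 /=; apply: leq_trans hj.
have := E true; have := E false => /= E2 E1.
have S1 : \sum_(0 <= t < plt D (ee D la) + j) (uu D x0 t).1 =
   \sum_(0 <= t < plt D (ee D la)) (uu D x0 t).1 + j%:Z * (prim_edge (dd D la)).1.
  by rewrite (big_cat_nat (n:=plt D (ee D la))) ?leq_addr //= E1.
have S2 : \sum_(0 <= t < plt D (ee D la) + j) (uu D x0 t).2 =
   \sum_(0 <= t < plt D (ee D la)) (uu D x0 t).2 + j%:Z * (prim_edge (dd D la)).2.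
  by rewrite (big_cat_nat (n:=plt D (ee D la))) ?leq_addr //= E2.
by rewrite S1 S2.
Qed.

Lemma Q_M D x0 : Delta_nonzero_vecs D -> Delta_balanced D -> QQ D x0 (size (ss D)) = (0,0).
Proof.
move=> h [b1 b2]; rewrite /QQ /uu.
have E k : \sum_(0 <= t < size (ss D))
   (if k then (prim_edge (dd D (nth x0 (ss D) t))).1 else (prim_edge (dd D (nth x0 (ss D) t))).2) = 0.
  rewrite (@sum_range_pred D x0 predT
     (fun l => if k then (prim_edge (dd D l)).1 else (prim_edge (dd D l)).2)) //.
  have -> : \sum_(l < size D | predT l) iter (latlen (dd D l))
      (+%R (if k then (prim_edge (dd D l)).1 else (prim_edge (dd D l)).2)) 0 =
      \sum_(l < size D) (if k then - (dd D l).2 else (dd D l).1).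
    by apply: eq_bigr => l _; case: k; rewrite (iter_prim _ true) || rewrite (iter_prim _ false).
  case: k.
    by rewrite sumrN /dd -(big_mkord xpredT (fun l => (nth (0,0) D l).2)) -(@big_nth _ _ _ _ (0,0) D xpredT (fun x : vec => x.2)) b2 oppr0.
  by rewrite /dd -(big_mkord xpredT (fun l => (nth (0,0) D l).1)) -(@big_nth _ _ _ _ (0,0) D xpredT (fun x : vec => x.1)) b1.
by rewrite (E true) (E false).
Qed.

Lemma side_len_eq D (x0 : 'I_(size D)) (la : 'I_(size D)) : Delta_nonzero_vecs D ->
  side_len D (dd D la) = (ple D (ee D la) - plt D (ee D la))%N.
Proof.
move=> h.
have E : \sum_(0 <= t < size (ss D) | (fun x => ~~ ang_lt (ee D x) (ee D la) && ~~ ang_lt (ee D la) (ee D x)) (nth x0 (ss D) t)) 1%N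
    = \sum_(l < size D | ~~ ang_lt (ee D l) (ee D la) && ~~ ang_lt (ee D la) (ee D l)) latlen (dd D l).
  rewrite (@transport _ 0%N addn D x0 (fun x => ~~ ang_lt (ee D x) (ee D la) && ~~ ang_lt (ee D la) (ee D x)) (fun _ => 1%N)); apply: eq_bigr => l _.
  by rewrite iter_addn_0 mul1n.
rewrite /side_len (big_nth (0,0)) big_mkord.
have -> : \sum_(i < size D | same_dir (dd D la) (nth (0, 0) D i)) latlen (nth (0, 0) D i) =
   \sum_(l < size D | ~~ ang_lt (ee D l) (ee D la) && ~~ ang_lt (ee D la) (ee D l)) latlen (dd D l).
  apply: eq_bigl => l; rewrite andbC ang_cls ?ee_nz // /ee cross_rot dot_rot.
  by [].
rewrite -E.
transitivity (\sum_(plt D (ee D la) <= t < ple D (ee D la)) 1%N); last first.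
  by rewrite sum_nat_const_nat muln1.
rewrite (big_nat_widen _ _ _ _ _ (ple_leM D (ee D la))).
rewrite (big_nat_widenl _ _ _ _ _ (leq0n (plt D (ee D la)))).
rewrite [LHS]big_nat_cond [RHS]big_nat_cond.
apply: eq_bigl => t /=; case: (boolP (t < size (ss D))%N) => tM /=.
  by rewrite cls_char // andbC.
by [].
Qed.

Lemma cross_QQ D x0 k f :
  cross (QQ D x0 k) f = \sum_(0 <= t < k) cross (uu D x0 t) f.
Proof. by rewrite /cross /QQ /= !mulr_suml -sumrB. Qed.

Lemma cross_rot_prim (b f : vec) : cross (rot b) f = cross (prim_edge b) f * (latlen b)%:Z.
Proof. case: (prim_mul b) => h1 h2; rewrite /cross h1 h2; ring. Qed.

Lemma cross_prim_self (b : vec) : cross (prim_edge b) (rot b) = 0.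
Proof. case: (prim_mul b) => h1 h2; rewrite /cross h1 h2; ring. Qed.

Lemma sgn_pos D (l : 'I_(size D)) f : Delta_nonzero_vecs D ->
  (0 < cross (prim_edge (dd D l)) f) = (0 < cross (ee D l) f).
Proof.
move=> h; rewrite /ee cross_rot_prim pmulr_lgt0 //.
by rewrite ltz_nat latlen_gt0 // dd_nz.
Qed.

Lemma sgn_neg D (l : 'I_(size D)) f : Delta_nonzero_vecs D ->
  (cross (prim_edge (dd D l)) f < 0) = (cross (ee D l) f < 0).
Proof.
move=> h; rewrite /ee cross_rot_prim pmulr_llt0 //.
by rewrite ltz_nat latlen_gt0 // dd_nz.
Qed.

Lemma sgn_ge0 D (l : 'I_(size D)) f : Delta_nonzero_vecs D ->
  (0 <= cross (prim_edge (dd D l)) f) = (0 <= cross (ee D l) f).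
Proof. by move=> h; rewrite !leNgt sgn_neg. Qed.

Lemma sgn_eq0 D (l : 'I_(size D)) f : Delta_nonzero_vecs D ->
  (cross (prim_edge (dd D l)) f == 0) = (cross (ee D l) f == 0).
Proof.
move=> h; rewrite /ee cross_rot_prim mulf_eq0 orbC.
by rewrite (_ : ((latlen (dd D l))%:Z == 0) = false) //; apply/negbTE; rewrite -lt0n latlen_gt0 // dd_nz.
Qed.


Lemma w_before D x0 (la : 'I_(size D)) t : Delta_nonzero_vecs D ->
  half (ee D la) = 0%N -> (t < plt D (ee D la))%N -> 0 < cross (uu D x0 t) (ee D la).
Proof.
move=> h hf ht; have tM : (t < size (ss D))%N by apply: leq_trans ht (count_size _ _).
rewrite /uu sgn_pos //; apply: F1 => //.
by rewrite plt_char // ee_nz.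
Qed.

Lemma w_class D x0 (la : 'I_(size D)) t : Delta_nonzero_vecs D ->
  (plt D (ee D la) <= t < ple D (ee D la))%N -> cross (uu D x0 t) (ee D la) = 0.
Proof.
move=> h ht; have tM : (t < size (ss D))%N.
  by case/andP: ht => _ ht; apply: leq_trans ht (ple_leM _ _).
by rewrite (@uu_cls D x0 la t h tM ht) cross_prim_self.
Qed.

Lemma w_after_neg D x0 (la : 'I_(size D)) t : Delta_nonzero_vecs D ->
  half (ee D la) != 0%N -> (ple D (ee D la) <= t < size (ss D))%N ->
  cross (uu D x0 t) (ee D la) < 0.
Proof.
move=> h hf /andP[t1 tM].
rewrite /uu sgn_neg //; apply: F2 => //.
have := ple_char x0 h (ee_nz la h) tM; rewrite ltnNge t1 /=.
by move/negbFE.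
Qed.

Lemma w_after_pos D x0 (la : 'I_(size D)) t0 t : Delta_nonzero_vecs D ->
  half (ee D la) = 0%N -> (ple D (ee D la) <= t0)%N -> (t0 <= t)%N -> (t < size (ss D))%N ->
  0 < cross (uu D x0 t0) (ee D la) -> 0 < cross (uu D x0 t) (ee D la).
Proof.
move=> h hf t01 t0t tM.
have t0M : (t0 < size (ss D))%N by apply: leq_ltn_trans tM.
rewrite /uu !sgn_pos // => hw; apply: (L1s _ _ _ hf _ hw) => //; rewrite ?ee_nz //.
  have := ple_char x0 h (ee_nz la h) t0M; rewrite ltnNge t01 /=.
  by move/negbFE.
exact: ss_le.
Qed.

Lemma w_after_nneg D x0 (la : 'I_(size D)) t0 t : Delta_nonzero_vecs D ->
  half (ee D la) = 0%N -> (ple D (ee D la) <= t0)%N -> (t0 <= t)%N -> (t < size (ss D))%N ->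
  0 <= cross (uu D x0 t0) (ee D la) -> 0 <= cross (uu D x0 t) (ee D la).
Proof.
move=> h hf t01 t0t tM.
have t0M : (t0 < size (ss D))%N by apply: leq_ltn_trans tM.
rewrite /uu !sgn_ge0 // => hw; apply: (L1w _ _ _ hf _ hw) => //; rewrite ?ee_nz //.
  have := ple_char x0 h (ee_nz la h) t0M; rewrite ltnNge t01 /=.
  by move/negbFE.
exact: ss_le.
Qed.

Lemma in_ss D x0 (l : 'I_(size D)) : Delta_nonzero_vecs D ->
  exists2 t, (t < size (ss D))%N & nth x0 (ss D) t = l.
Proof.
move=> h; have pe : perm_eq (ss D) (UU D) by rewrite /ss perm_sort perm_refl.
have ls : l \in ss D.
  rewrite (perm_mem pe) /UU; apply/flattenP; exists (nseq (latlen (dd D l)) l).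
    by apply: map_f; rewrite mem_enum.
  by rewrite mem_nseq eqxx andbT latlen_gt0 // dd_nz.
by exists (index l (ss D)); [rewrite index_mem | apply: nth_index].
Qed.

Lemma lab_of D (a : vec) : a \in D -> exists l : 'I_(size D), dd D l = a.
Proof.
move=> aD; have hi : (index a D < size D)%N by rewrite index_mem.
by exists (Ordinal hi); rewrite /dd nth_index.
Qed.

Lemma all_zero_false D x0 (la : 'I_(size D)) : Delta_nonzero_vecs D -> Delta_nondegenerate D ->
  (forall t, (t < size (ss D))%N -> cross (uu D x0 t) (ee D la) = 0) -> False.
Proof.
move=> h [a aD [b bD cab]] hw.
have key l : cross (ee D l) (ee D la) = 0.
  have [t tM tl] := in_ss x0 l h.
  by apply/eqP; rewrite -sgn_eq0 // -tl; apply/eqP; apply: hw.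
move: cab; have [l1 <-] := lab_of aD; have [l2 <-] := lab_of bD.
rewrite -cross_rot (par3 (ee_nz la h) (key l1) (key l2)).
by rewrite eqxx.
Qed.

Lemma sum_ge0n (a b : nat) (F : nat -> int) :
  (forall t, (a <= t < b)%N -> 0 <= F t) -> 0 <= \sum_(a <= t < b) F t.
Proof. by move=> h; rewrite big_nat_cond; apply: sumr_ge0 => t /andP[ht _]; apply: h. Qed.

Lemma sum_le0n (a b : nat) (F : nat -> int) :
  (forall t, (a <= t < b)%N -> F t <= 0) -> \sum_(a <= t < b) F t <= 0.
Proof.
move=> h; rewrite -oppr_ge0 -sumrN; apply: sum_ge0n => t ht; rewrite oppr_ge0; exact: h.
Qed.

Lemma sum_pos_at (a b t0 : nat) (F : nat -> int) :
  (forall t, (a <= t < b)%N -> 0 <= F t) -> (a <= t0 < b)%N -> 0 < F t0 ->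
  0 < \sum_(a <= t < b) F t.
Proof.
move=> h /andP[h1 h2] hp.
rewrite (big_cat_nat (n:=t0)) ?(ltnW h2) //= [X in _ + X]big_ltn //.
have s1 : 0 <= \sum_(a <= t < t0) F t.
  by apply: sum_ge0n => t /andP[t1 t2]; apply: h; rewrite t1 /=; apply: ltn_trans t2 h2.
have s2 : 0 <= \sum_(t0.+1 <= t < b) F t.
  by apply: sum_ge0n => t /andP[t1 t2]; apply: h; rewrite t2 andbT; apply: leq_trans h1 (ltnW t1).
exact: ltr_wpDl s1 (ltr_wpDr s2 hp).
Qed.

Lemma sum_neg_at (a b t0 : nat) (F : nat -> int) :
  (forall t, (a <= t < b)%N -> F t <= 0) -> (a <= t0 < b)%N -> F t0 < 0 ->
  \sum_(a <= t < b) F t < 0.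
Proof.
move=> h ht hn; rewrite -oppr_gt0 -sumrN; apply: (sum_pos_at _ ht).
  by move=> t /h; rewrite oppr_ge0.
by rewrite oppr_gt0.
Qed.

Lemma q_split D x0 f (a b : nat) : (a <= b)%N ->
  cross (QQ D x0 b) f = cross (QQ D x0 a) f + \sum_(a <= t < b) cross (uu D x0 t) f.
Proof. by move=> ab; rewrite !cross_QQ (big_cat_nat (n:=a)). Qed.

Lemma q_M D x0 f : Delta_nonzero_vecs D -> Delta_balanced D ->
  cross (QQ D x0 (size (ss D))) f = 0.
Proof. by move=> h hb; rewrite Q_M // /cross /= !mul0r subr0. Qed.

Lemma q_class D x0 (la : 'I_(size D)) k : Delta_nonzero_vecs D ->
  (plt D (ee D la) <= k <= ple D (ee D la))%N ->
  cross (QQ D x0 k) (ee D la) = cross (QQ D x0 (plt D (ee D la))) (ee D la).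
Proof.
move=> h /andP[k1 k2]; rewrite (q_split x0 _ k1) big_nat_cond big1 ?addr0 //.
move=> t /andP[/andP[t1 t2] _]; apply: w_class => //.
by rewrite t1 /=; apply: leq_trans t2 k2.
Qed.


Lemma q_nonneg D x0 (la : 'I_(size D)) : Delta_nonzero_vecs D -> Delta_balanced D ->
  0 <= cross (QQ D x0 (plt D (ee D la))) (ee D la).
Proof.
move=> h hb.
have pp := plt_le_ple D (ee D la); have pM := ple_leM D (ee D la).
case: (eqVneq (half (ee D la)) 0%N) => hf.
  rewrite cross_QQ; apply: sum_ge0n => t /andP[_ ht]; apply: ltW; exact: w_before.
have := q_M x0 (ee D la) h hb.
rewrite (q_split x0 _ pM) (q_class x0 (k:=ple D (ee D la))) ?pp ?leqnn //.
move=> E.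
have : \sum_(ple D (ee D la) <= t < size (ss D)) cross (uu D x0 t) (ee D la) <= 0.
  by apply: sum_le0n => t ht; apply: ltW; apply: w_after_neg.
move: E; set S := \sum_(_ <= t < _) _; set q := cross _ _; lia.
Qed.

Lemma fwd D x0 (la : 'I_(size D)) j : Delta_nonzero_vecs D -> Delta_balanced D ->
  Delta_nondegenerate D ->
  (ple D (ee D la) < j <= size (ss D))%N ->
  cross (QQ D x0 j) (ee D la) < cross (QQ D x0 (plt D (ee D la))) (ee D la) \/
  (j = size (ss D) /\ plt D (ee D la) = 0%N).
Proof.
move=> h hb hnd /andP[j1 jM].
set f := ee D la; set p := plt D f; set p' := ple D f; set M := size (ss D).
set w := fun t => cross (uu D x0 t) f.
have pp : (p <= p')%N := plt_le_ple D f.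
have qp' : cross (QQ D x0 p') f = cross (QQ D x0 p) f.
  by apply: q_class => //; apply/andP; split; [exact: pp | exact: leqnn].
have qj : cross (QQ D x0 j) f = cross (QQ D x0 p) f + \sum_(p' <= t < j) w t.
  by rewrite (q_split x0 _ (ltnW j1)) qp'.
case: (eqVneq (half f) 0%N) => hf; last first.
  left; rewrite qj; suff : \sum_(p' <= t < j) w t < 0.
    by set a := \sum_(_ <= _ < _) _; set b := cross _ _; lia.
  apply: (@sum_neg_at _ _ p') => [t /andP[t1 t2]| |].
  - by apply: ltW; apply: w_after_neg => //; rewrite t1 /=; apply: leq_trans t2 jM.
  - by rewrite leqnn.
  - by apply: w_after_neg => //; rewrite leqnn /=; apply: leq_trans j1 jM.
have q0 := q_nonneg x0 la h hb.
have qM := q_M x0 f h hb.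
case: (boolP (has (fun t => 0 < w t) (index_iota p' j))) => [/hasP [t0 t0i w0]|/hasPn hn].
  rewrite mem_index_iota in t0i; case/andP: t0i => t01 t02.
  have allpos t : (t0 <= t < M)%N -> 0 < w t.
    by case/andP=> a b; apply: (@w_after_pos D x0 la t0 t).
  have qMj : cross (QQ D x0 M) f = cross (QQ D x0 j) f + \sum_(j <= t < M) w t.
    exact: q_split.
  case: (ltnP j M) => jM'.
    left; have : 0 < \sum_(j <= t < M) w t.
      apply: (@sum_pos_at _ _ j) => [t /andP[t1 t2]| |].
      - by apply: ltW; apply: allpos; rewrite t2 andbT; apply: leq_trans (ltnW t02) t1.
      - by rewrite leqnn.
      - by apply: allpos; rewrite jM' andbT; apply: ltnW.
    move: qMj q0; rewrite qM; set a := \sum_(_ <= _ < _) _; set b := cross (QQ D x0 j) f.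
    set c := cross _ _; lia.
  have jMe : j = M by apply/eqP; rewrite eqn_leq jM jM'.
  case: (eqVneq p 0%N) => p0; first by right.
  left; rewrite jMe qM.
  have : 0 < cross (QQ D x0 p) f.
    rewrite cross_QQ; apply: (@sum_pos_at _ _ 0) => [t /andP[_ t2]||].
    - by apply: ltW; apply: w_before.
    - by rewrite lt0n p0.
    - by apply: w_before; rewrite // lt0n p0.
  by [].
have hneg : w p' < 0.
  rewrite ltNge; apply/negP => hw0.
  apply: (@all_zero_false D x0 la h hnd) => t tM.
  have ge0 s : (s < M)%N -> 0 <= w s.
    move=> sM; case: (ltnP s p) => sp.
      by apply: ltW; apply: w_before.
    case: (ltnP s p') => sp'.
      by rewrite /w w_class // sp.
    exact: (@w_after_nneg D x0 la p' s).
  apply/eqP; rewrite eq_le ge0 // andbT leNgt; apply/negP => wpos.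
  have : 0 < \sum_(0 <= s < M) w s.
    by apply: (@sum_pos_at 0 M t) => [s /andP[_ sM]||]; [exact: ge0 | rewrite tM | ].
  by rewrite -cross_QQ qM ltxx.
left; rewrite qj big_ltn //.
have : \sum_(p'.+1 <= t < j) w t <= 0.
  apply: sum_le0n => t /andP[t1 t2].
  by have := hn t; rewrite mem_index_iota (ltnW t1) t2 /= => /(_ isT); rewrite ltNge negbK.
set a := \sum_(_ <= _ < _) _; move: hneg; set b := w p'; set c := cross _ _; lia.
Qed.

Lemma QQ0 D x0 : QQ D x0 0 = (0,0).
Proof. by rewrite /QQ !big_geq. Qed.

Lemma inj_Q D x0 i j : Delta_nonzero_vecs D -> Delta_balanced D -> Delta_nondegenerate D ->
  (i < j)%N -> (j <= size (ss D))%N -> QQ D x0 i = QQ D x0 j -> i = 0%N /\ j = size (ss D).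
Proof.
move=> h hb hnd ij jM eQ.
have iM : (i < size (ss D))%N by apply: leq_trans ij jM.
set la := nth x0 (ss D) i.
have hc := cls_char x0 la h iM; rewrite -/la (negbTE (ang_irr _)) /= in hc.
case/andP: (esym hc) => pi ip'.
have pn0 := prim_neq0 (dd_nz la h).
have Qi : QQ D x0 i = vadd (QQ D x0 (plt D (ee D la))) (vscale (i - plt D (ee D la))%N%:Z (prim_edge (dd D la))).
  by rewrite -Q_class ?subnKC // ltnW.
case: (leqP j (ple D (ee D la))) => jp'.
  have Qj : QQ D x0 j = vadd (QQ D x0 (plt D (ee D la))) (vscale (j - plt D (ee D la))%N%:Z (prim_edge (dd D la))).
    by rewrite -Q_class ?subnKC //; apply: leq_trans (ltnW ij).
  move: eQ pn0; rewrite Qi Qj; case: (QQ _ _ _) => a1 a2; case: (prim_edge _) => u1 u2.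
  rewrite /vadd /vscale /= xpair_eqE => -[e1 e2] /nandP[] /eqP un0; exfalso.
  - have : ((i - plt D (ee D la))%N%:Z - (j - plt D (ee D la))%N%:Z) * u1 = 0.
      by rewrite mulrBl (addrI _ e1) subrr.
    move/eqP; rewrite mulf_eq0 (negbTE (introN eqP un0)) orbF subr_eq0 => /eqP.
    move/eqP; rewrite eqz_nat => /eqP; lia.
  - have : ((i - plt D (ee D la))%N%:Z - (j - plt D (ee D la))%N%:Z) * u2 = 0.
      by rewrite mulrBl (addrI _ e2) subrr.
    move/eqP; rewrite mulf_eq0 (negbTE (introN eqP un0)) orbF subr_eq0 => /eqP.
    move/eqP; rewrite eqz_nat => /eqP; lia.
have := @fwd D x0 la j h hb hnd; rewrite jp' jM => /(_ isT) [].
  rewrite -eQ (@q_class D x0 la i h); first by rewrite ltxx.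
  by rewrite pi ltnW.
case=> jMe p0; split => //.
move: eQ; rewrite jMe Q_M // Qi p0 QQ0 subn0.
move: pn0; case: (prim_edge _) => u1 u2; rewrite /vadd /vscale /= !add0r xpair_eqE.
case/nandP => /eqP un0 [e1 e2].
- by move/eqP: e1; rewrite mulf_eq0 (negbTE (introN eqP un0)) orbF => /eqP; lia.
- by move/eqP: e2; rewrite mulf_eq0 (negbTE (introN eqP un0)) orbF => /eqP; lia.
Qed.

Lemma same_dir_cls D (la l : 'I_(size D)) : Delta_nonzero_vecs D ->
  same_dir (dd D la) (dd D l) = ~~ ang_lt (ee D l) (ee D la) && ~~ ang_lt (ee D la) (ee D l).
Proof. by move=> h; rewrite andbC ang_cls ?ee_nz // /ee cross_rot dot_rot. Qed.

Lemma range_big (R : Type) (idx : R) (op : Monoid.com_law idx) D x0 (la : 'I_(size D))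
  (F : 'I_(size D) -> R) : Delta_nonzero_vecs D ->
  \big[op/idx]_(plt D (ee D la) <= t < ple D (ee D la)) F (nth x0 (ss D) t) =
  \big[op/idx]_(l < size D | same_dir (dd D la) (dd D l)) iter (latlen (dd D l)) (op (F l)) idx.
Proof.
move=> h.
rewrite (eq_bigl (fun l => ~~ ang_lt (ee D l) (ee D la) && ~~ ang_lt (ee D la) (ee D l)));
  last by move=> l; rewrite same_dir_cls.
rewrite -(transport _ x0 (fun x => ~~ ang_lt (ee D x) (ee D la) && ~~ ang_lt (ee D la) (ee D x))).
rewrite (big_nat_widen _ _ _ _ _ (ple_leM D (ee D la))).
rewrite (big_nat_widenl _ _ _ _ _ (leq0n (plt D (ee D la)))).
rewrite [LHS]big_nat_cond [RHS]big_nat_cond.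
apply: eq_bigl => t /=; case: (boolP (t < size (ss D))%N) => tM /=.
  by rewrite cls_char // andbC.
by [].
Qed.

Lemma cnt_uniq (M a b : nat) : (a <= M)%N -> (b <= M)%N ->
  (forall t, (t < M)%N -> (t < a)%N = (t < b)%N) -> a = b.
Proof.
move=> aM bM h; apply/eqP; rewrite eqn_leq; apply/andP; split; rewrite leqNgt; apply/negP.
  by move=> ba; have := h b (leq_trans ba aM); rewrite ba ltnn.
by move=> ab; have := h a (leq_trans ab bM); rewrite ab ltnn.
Qed.

Lemma cls_counts D (la l : 'I_(size D)) : Delta_nonzero_vecs D ->
  ~~ ang_lt (ee D l) (ee D la) && ~~ ang_lt (ee D la) (ee D l) ->
  plt D (ee D l) = plt D (ee D la) /\ ple D (ee D l) = ple D (ee D la).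
Proof.
move=> h /andP[h1 h2]; split; apply: eq_count => x /=.
  apply/idP/idP => hx.
    by case/orP: (ang_negtrans (ee_nz x h) (ee_nz la h) (ee_nz l h) hx) => // H; rewrite H in h2.
  by case/orP: (ang_negtrans (ee_nz x h) (ee_nz l h) (ee_nz la h) hx) => // H; rewrite H in h1.
apply/idP/idP; apply: contra => hx.
  by case/orP: (ang_negtrans (ee_nz la h) (ee_nz l h) (ee_nz x h) hx) => // H; rewrite H in h2.
by case/orP: (ang_negtrans (ee_nz l h) (ee_nz la h) (ee_nz x h) hx) => // H; rewrite H in h1.
Qed.

Lemma next_start D x0 (la : 'I_(size D)) : Delta_nonzero_vecs D ->
  (ple D (ee D la) < size (ss D))%N ->
  plt D (ee D (nth x0 (ss D) (ple D (ee D la)))) = ple D (ee D la).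
Proof.
move=> h pM; set p' := ple D (ee D la); set g := ee D (nth x0 (ss D) p').
have fg : ang_lt (ee D la) g.
  by have := ple_char x0 h (ee_nz la h) pM; rewrite ltnn => /negbFE.
apply: (@cnt_uniq (size (ss D))); [exact: count_size | exact: ple_leM |].
move=> t tM; rewrite -(plt_char x0) ?ee_nz // -(ple_char x0) ?ee_nz //.
apply/idP/idP => H.
  apply/negP => fe; have : (p' <= t)%N.
    by rewrite leqNgt -(ple_char x0 h (ee_nz la h) tM) fe.
  by move=> pt; have := ss_le x0 h pt tM; rewrite H.
by case/orP: (ang_negtrans (ee_nz la h) (ee_nz (nth x0 (ss D) t) h) (ee_nz (nth x0 (ss D) p') h) fg) => // H'; rewrite H' in H.
Qed.

Lemma prev_end D x0 (la : 'I_(size D)) : Delta_nonzero_vecs D ->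
  (0 < plt D (ee D la))%N ->
  ple D (ee D (nth x0 (ss D) (plt D (ee D la)).-1)) = plt D (ee D la).
Proof.
move=> h p0; set p := plt D (ee D la); set g := ee D (nth x0 (ss D) p.-1).
have pM : (p <= size (ss D))%N by apply: count_size.
have p1M : (p.-1 < size (ss D))%N by apply: leq_trans pM; rewrite prednK.
have gf : ang_lt g (ee D la).
  by rewrite /g plt_char ?ee_nz // prednK.
apply: (@cnt_uniq (size (ss D))); [exact: ple_leM | exact: count_size |].
move=> t tM; rewrite -(plt_char x0) ?ee_nz // -(ple_char x0) ?ee_nz //.
apply/idP/idP => H.
  by case/orP: (ang_negtrans (ee_nz (nth x0 (ss D) p.-1) h) (ee_nz (nth x0 (ss D) t) h) (ee_nz la h) gf) => // H'; rewrite H' in H.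
have tp : (t <= p.-1)%N by rewrite -ltnS prednK // -(plt_char x0) ?ee_nz.
exact: ss_le.
Qed.

Lemma first_plt D x0 : Delta_nonzero_vecs D -> (0 < size (ss D))%N ->
  plt D (ee D (nth x0 (ss D) 0)) = 0%N.
Proof.
move=> h M0; apply: (@cnt_uniq (size (ss D))); [exact: count_size | exact: leq0n |].
move=> t tM; rewrite -(plt_char x0) ?ee_nz // ltn0; apply/negbTE.
exact: ss_le.
Qed.

Lemma last_ple D x0 : Delta_nonzero_vecs D -> (0 < size (ss D))%N ->
  ple D (ee D (nth x0 (ss D) (size (ss D)).-1)) = size (ss D).
Proof.
move=> h M0; apply: (@cnt_uniq (size (ss D))); [exact: ple_leM | exact: leqnn |].
move=> t tM; rewrite -(ple_char x0) ?ee_nz // tM.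
by apply: ss_le; rewrite ?prednK // -ltnS prednK.
Qed.

Lemma side_pt_Q D x0 (la : 'I_(size D)) j : Delta_nonzero_vecs D ->
  (plt D (ee D la) + j <= ple D (ee D la))%N ->
  side_pt D (dd D la) j = QQ D x0 (plt D (ee D la) + j).
Proof. by move=> h hj; rewrite Q_class // Q_start. Qed.

Definition Pf (R : realType) D (x0 : 'I_(size D)) (z : 'I_(size D) -> R[i]) (la : 'I_(size D))
  : {poly R[i]} :=
  \prod_(plt D (ee D la) <= t < ple D (ee D la)) ('X - (z (nth x0 (ss D) t))%:P).

Lemma Pf_eq (R : realType) D x0 (z : 'I_(size D) -> R[i]) la : Delta_nonzero_vecs D ->
  \prod_(l < size D | same_dir (dd D la) (dd D l)) ('X - (z l)%:P) ^+ latlen (dd D l)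
  = Pf x0 z la.
Proof.
move=> h; rewrite /Pf (range_big _ x0 la (fun l => 'X - (z l)%:P) h).
by apply: eq_bigr => l _; rewrite iter_mulr_1.
Qed.

Lemma Pf_list (R : realType) D x0 (z : 'I_(size D) -> R[i]) la :
  Pf x0 z la = \prod_(x <- [seq z (nth x0 (ss D) t) | t <- index_iota (plt D (ee D la)) (ple D (ee D la))])
     ('X - x%:P).
Proof. by rewrite /Pf big_map. Qed.

Lemma Pf_size (R : realType) D x0 (z : 'I_(size D) -> R[i]) la :
  size (Pf x0 z la) = (ple D (ee D la) - plt D (ee D la)).+1.
Proof. by rewrite Pf_list size_prod_XsubC size_map size_iota. Qed.

Lemma Pf_top (R : realType) D x0 (z : 'I_(size D) -> R[i]) la :
  (Pf x0 z la)`_(ple D (ee D la) - plt D (ee D la)) = 1.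
Proof.
have := lead_coef_prod_XsubC [seq z (nth x0 (ss D) t) | t <- index_iota (plt D (ee D la)) (ple D (ee D la))] predT id.
by rewrite -Pf_list lead_coefE Pf_size.
Qed.

Lemma Pf_coef0 (R : realType) D x0 (z : 'I_(size D) -> R[i]) la :
  (Pf x0 z la)`_0 = \prod_(plt D (ee D la) <= t < ple D (ee D la)) - z (nth x0 (ss D) t).
Proof.
rewrite -horner_coef0 /Pf horner_prod; apply: eq_bigr => t _.
by rewrite hornerXsubC sub0r.
Qed.

Lemma Pf_high (R : realType) D x0 (z : 'I_(size D) -> R[i]) la j :
  (ple D (ee D la) - plt D (ee D la) < j)%N -> (Pf x0 z la)`_j = 0.
Proof. by move=> hj; rewrite nth_default // Pf_size. Qed.

Lemma Pf_neq0 (R : realType) D x0 (z : 'I_(size D) -> R[i]) la : Pf x0 z la != 0.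
Proof. by rewrite Pf_list monic_neq0 // monic_prod_XsubC. Qed.

Lemma side_poly_coef (R : realType) D (c : vec -> R[i]) a j :
  (side_poly D c a)`_j = if (j < (side_len D a).+1)%N then c (side_pt D a j) else 0.
Proof. by rewrite /side_poly -(poly_def _ (fun k => c (side_pt D a k))) coef_poly. Qed.

Lemma side_coeffs (R : realType) D x0 (z : 'I_(size D) -> R[i]) (c : vec -> R[i]) la lam :
  Delta_nonzero_vecs D ->
  side_poly D c (dd D la) = lam *: Pf x0 z la ->
  c (QQ D x0 (plt D (ee D la))) =
     lam * \prod_(plt D (ee D la) <= t < ple D (ee D la)) - z (nth x0 (ss D) t) /\
  c (QQ D x0 (ple D (ee D la))) = lam.
Proof.
move=> h E; have pp := plt_le_ple D (ee D la).
have L := side_len_eq x0 la h.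
split.
  have := congr1 (fun p : {poly R[i]} => p`_0) E; rewrite /= side_poly_coef coefZ Pf_coef0 /=.
  by rewrite (side_pt_Q x0) ?addn0.
have := congr1 (fun p : {poly R[i]} => p`_(ple D (ee D la) - plt D (ee D la))) E.
rewrite /= side_poly_coef coefZ Pf_top mulr1 L ltnSn.
by rewrite (side_pt_Q x0) ?subnKC.
Qed.

Lemma dir1 (R : realType) D x0 (z : 'I_(size D) -> R[i]) :
  Delta_nonzero_vecs D -> Delta_balanced D -> Delta_nondegenerate D ->
  (0 < size (ss D))%N ->
  menelaus D z -> \prod_(0 <= t < size (ss D)) - z (nth x0 (ss D) t) = 1.
Proof.
move=> h hb hnd M0 [c [_ H]].
set y := fun t => - z (nth x0 (ss D) t).
set M := size (ss D).
set A := fun k => (\prod_(0 <= t < k) y t) * c (QQ D x0 k).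
have step la : exists2 lam : R[i], lam != 0 &
    A (plt D (ee D la)) = A (ple D (ee D la)) /\ c (QQ D x0 (ple D (ee D la))) = lam.
  have [_ [lam l0 E]] := H la.
  rewrite (Pf_eq x0 z la h) in E.
  have [E1 E2] := side_coeffs h E.
  exists lam => //; split => //.
  rewrite /A /y E1 E2 (big_cat_nat (n:=plt D (ee D la)) (leq0n _) (plt_le_ple D (ee D la))) /=.
  ring.
have chain n : forall i, (i <= n)%N -> (i < M)%N ->
    A 0%N = A (ple D (ee D (nth x0 (ss D) i))).
  elim: n => [|n IH] i hi iM.
    have [lam _ [<- _]] := step (nth x0 (ss D) i).
    move: hi; rewrite leqn0 => /eqP ->.
    by rewrite (first_plt x0 h M0).
  have [lam _ [<- _]] := step (nth x0 (ss D) i).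
  have hc := cls_char x0 (nth x0 (ss D) i) h iM.
  rewrite (negbTE (ang_irr _)) /= in hc; case/andP: (esym hc) => pi _.
  case: (eqVneq (plt D (ee D (nth x0 (ss D) i))) 0%N) => p0; first by rewrite p0.
  rewrite -(prev_end x0 h); last by rewrite lt0n.
  apply: IH.
    rewrite -ltnS prednK ?lt0n //; apply: leq_trans hi; exact: leq_trans pi _.
  rewrite prednK ?lt0n //; exact: leq_trans pi (ltnW iM).
have := chain M.-1 M.-1 (leqnn _); rewrite prednK // => /(_ (leqnn _)).
rewrite (last_ple x0 h M0).
have [lam l0 [_ E2]] := step (nth x0 (ss D) M.-1).
rewrite (last_ple x0 h M0) in E2.
rewrite /A big_geq // mul1r QQ0 -(Q_M x0 h hb) E2.
move=> e; apply: (mulIf l0); rewrite mul1r {2}e.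
by [].
Qed.

Lemma dir2 (R : realType) D x0 (z : 'I_(size D) -> R[i]) :
  Delta_nonzero_vecs D -> Delta_balanced D -> Delta_nondegenerate D ->
  (0 < size (ss D))%N -> (forall l, z l != 0) ->
  \prod_(0 <= t < size (ss D)) - z (nth x0 (ss D) t) = 1 -> menelaus D z.
Proof.
move=> h hb hnd M0 zn0 HY.
set M := size (ss D).
set y := fun t => - z (nth x0 (ss D) t).
set lamf := fun la : 'I_(size D) => \prod_(ple D (ee D la) <= t < M) y t.
set val := fun k => lamf (nth x0 (ss D) k) *
   (Pf x0 z (nth x0 (ss D) k))`_(k - plt D (ee D (nth x0 (ss D) k))).
pose c := fun w => if [pick k : 'I_M | QQ D x0 k == w] is Some k then val (nat_of_ord k) else 0.
have cQ k : (k < M)%N -> c (QQ D x0 k) = val k.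
  move=> kM; rewrite /c; case: pickP => [k' /eqP e|none]; last first.
    by have := none (Ordinal kM); rewrite eqxx.
  congr (val _); case: (ltngtP k' k) => // hk.
    by have [_ e2] := inj_Q h hb hnd hk (ltnW kM) e; rewrite e2 ltnn in kM.
  by have [_ e2] := inj_Q h hb hnd hk (ltnW (ltn_ord k')) (esym e); move: (ltn_ord k'); rewrite e2 ltnn.
have lamfn la : lamf la != 0.
  rewrite /lamf prodf_seq_neq0; apply/allP => t _ /=; by rewrite oppr_eq0 zn0.
have val0 : val 0%N = 1.
  rewrite /val sub0n /lamf Pf_coef0 (first_plt x0 h M0) -/y.
  have E := @big_cat_nat _ _ _ (ple D (ee D (nth x0 (ss D) 0))) 0 M xpredT y (leq0n _) (ple_leM _ _).
  by rewrite mulrC -E.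
have side la : side_poly D c (dd D la) = lamf la *: Pf x0 z la.
  apply/polyP => j; rewrite side_poly_coef coefZ (side_len_eq x0 la h).
  have pp := plt_le_ple D (ee D la); have pM := ple_leM D (ee D la).
  case: (ltnP j (ple D (ee D la) - plt D (ee D la)).+1) => hj; last by rewrite Pf_high ?mulr0.
  have hj' : (plt D (ee D la) + j <= ple D (ee D la))%N by rewrite -leq_subRL.
  rewrite (side_pt_Q x0) //.
  case: (ltnP j (ple D (ee D la) - plt D (ee D la))) => hjL.
    have kp : (plt D (ee D la) + j < ple D (ee D la))%N by rewrite -ltn_subRL.
    have kM : (plt D (ee D la) + j < M)%N by apply: leq_trans kp pM.
    rewrite cQ // /val.
    have hc := cls_char x0 la h kM; rewrite leq_addr kp /= in hc.
    have [e1 e2] := cls_counts h hc.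
    by rewrite /lamf /Pf e1 e2 addKn.
  have jL : j = (ple D (ee D la) - plt D (ee D la))%N by apply/eqP; rewrite eqn_leq hjL -ltnS hj.
  rewrite jL subnKC // Pf_top mulr1.
  case: (ltnP (ple D (ee D la)) M) => pM'.
    rewrite cQ // /val (next_start x0 h pM') subnn Pf_coef0 (next_start x0 h pM').
    rewrite /lamf mulrC -(big_cat_nat (n := ple D (ee D (nth x0 (ss D) (ple D (ee D la)))))) //.
      by rewrite -{1}(next_start x0 h pM'); apply: plt_le_ple.
    exact: ple_leM.
  have pMe : ple D (ee D la) = M by apply/eqP; rewrite eqn_leq pM pM'.
  rewrite pMe /lamf pMe big_geq // (Q_M x0 h hb) -(QQ0 x0) cQ //.
exists c; split.
  exists (0,0); last by rewrite -(QQ0 x0) cQ // val0 oner_neq0.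
  apply/allP => b bD; have [l <-] := lab_of bD.
  rewrite -(Q_start x0 l h) (dot_cross (QQ _ _ _)) (_ : dot (0,0) (dd D l) = 0); first exact: q_nonneg.
  by rewrite /dot /= !mul0r addr0.
move=> la; rewrite -/(dd D la) (Pf_eq x0 z la h) side; split.
  by rewrite scaler_eq0 negb_or lamfn Pf_neq0.
by exists (lamf la).
Qed.

Lemma Y_eq (R : realType) D x0 (z : 'I_(size D) -> R[i]) :
  \prod_(0 <= t < size (ss D)) - z (nth x0 (ss D) t) =
  (-1) ^+ (\sum_(l < size D) latlen (dd D l)) * \prod_(l < size D) z l ^+ latlen (dd D l).
Proof.
have := @transport _ 1 *%R D x0 xpredT (fun l => - z l).
rewrite /= => ->.
rewrite -prodrXr -big_split /=; apply: eq_bigr => l _.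
by rewrite iter_mulr_1 -exprMn mulN1r.
Qed.

Unset Implicit Arguments.
Theorem lemma2p2 (R : realType) (D : seq vec) :
  Delta_nonzero_vecs D -> Delta_balanced D -> Delta_nondegenerate D -> Delta_even_vecs D ->
  torus_hypersurface (size D) (fun z : 'I_(size D) -> R[i] => menelaus D z).
Proof.
move=> h hb hnd _.
have n0 : (0 < size D)%N by case: hnd => a aD _; case: D aD {h hb} => //.
pose x0 := Ordinal n0.
have M0 : (0 < size (ss D))%N by have [t tM _] := in_ss x0 x0 h; apply: leq_ltn_trans tM.
pose m : 'X_{1.. size D} := [multinom latlen (dd D l) | l < size D].
pose sg : R[i] := (-1) ^+ (\sum_(l < size D) latlen (dd D l)).
have sgsg : sg * sg = 1 by rewrite /sg -expr2 sqrr_sign.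
have sg0 : sg != 0 by rewrite /sg signr_eq0.
have m0 : m != 0%MM.
  apply/negP => /eqP /mnmP /(_ x0); rewrite /m mnmE mnm0E => E.
  by have := latlen_gt0 (dd_nz x0 h); rewrite E.
pose F : {mpoly R[i][size D]} := 'X_[m] - sg%:MP.
have Fm : F@_m = 1 by rewrite /F mcoeffB mcoeffX mcoeffC eqxx (negbTE m0) mulr0 subr0.
have F0 : F@_0%MM = - sg by rewrite /F mcoeffB mcoeffX mcoeffC eqxx (negbTE m0) mulr1 sub0r.
exists F; split.
  by apply/negP => /eqP F0'; move: Fm; rewrite F0' mcoeff0 => /eqP; rewrite eq_sym oner_eq0.
split.
  case=> lam [m' E].
  have : F@_m != 0 by rewrite Fm oner_neq0.
  have : F@_0%MM != 0 by rewrite F0 oppr_eq0.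
  rewrite E !mcoeffZ !mcoeffX.
  case: (eqVneq m' 0%MM) => [->|_]; last by rewrite mulr0 eqxx.
  by move=> _; rewrite [0%MM == m]eq_sym (negbTE m0) mulr0 eqxx.
move=> z zn0.
have ev : mpoly.meval z F = \prod_(l < size D) z l ^+ latlen (dd D l) - sg.
  by rewrite /F mevalB mevalX mevalC; congr (_ - _); apply: eq_bigr => l _; rewrite /m mnmE.
rewrite ev; split.
  move=> hm; have := dir1 x0 h hb hnd M0 hm; rewrite Y_eq -/sg => e.
  apply/eqP; rewrite subr_eq0; apply/eqP.
  by have := congr1 (fun x => sg * x) e; rewrite /= mulrA sgsg mul1r mulr1.
move/eqP; rewrite subr_eq0 => /eqP e.
apply: (@dir2 R D x0 z h hb hnd M0 zn0); by rewrite Y_eq -/sg e sgsg.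
Qed.
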